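(* Let $q(\mathbf{y},\mathbf{x})$ be a joint distribution of a label $\mathbf{y}$ and inputs $\mathbf{x}\in\mathbb{R}^d$, and $e:\mathbb{R}^d\to\{0,1\}^d$ an explanation. Then $e$ is encoding if and only if there exist a selection $\mathbf{v}$ with $q(e(\mathbf{x})=\mathbf{v})>0$ and a set $\mathbf{S}_{\mathbf{v}}\subseteq\{\mathbf{x}_{\mathbf{v}}: e(\mathbf{x})=\mathbf{v}\}$ with $q(\mathbf{x}_{\mathbf{v}}\in\mathbf{S}_{\mathbf{v}})>0$ such that for all $\mathbf{a}\in\mathbf{S}_{\mathbf{v}}$, $\mathbf{y}$ is not conditionally independent of $\mathbf{E}_{\mathbf{v}}$ given $\mathbf{x}_{\mathbf{v}}=\mathbf{a}$.
   Context: For $\mathbf{v}\in\{0,1\}^d$, $\mathbf{x}_{\mathbf{v}}$ denotes the values of the coordinates selected by $\mathbf{v}$; the explanation is the random pair $\mathbf{x}_{e(\mathbf{x})}=(e(\mathbf{x}),\mathbf{x}_{e(\mathbf{x})})$, written $(\mathbf{v},\mathbf{a})$; $\mathbf{E}_{\mathbf{v}}=\mathbb{1}[e(\mathbf{x})=\mathbf{v}]$. Regular conditional distributions are assumed to exist. $e$ is encoding if there is a set $\mathbf{S}$ of pairs with $q(\mathbf{x}_{e(\mathbf{x})}\in\mathbf{S})>0$ such that for every $(\mathbf{v},\mathbf{a})\in\mathbf{S}$, $\mathbf{y}$ is not conditionally independent of $\mathbf{E}_{\mathbf{v}}$ given $\mathbf{x}_{\mathbf{v}}=\mathbf{a}$.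 *)

(* Defs.v *)
From HB Require Import structures.
From mathcomp Require Import all_boot all_order all_algebra.
From mathcomp Require Import all_classical all_reals all_analysis.
Set Implicit Arguments.
Unset Strict Implicit.
Unset Printing Implicit Defensive.
Import Order.TTheory GRing.Theory Num.Theory.
Local Open Scope classical_set_scope.
Local Open Scope ring_scope.

Section explanations.
Context {R : realType} {dY : measure_display} {Y : measurableType dY} {d : nat}.

(* x_v : the coordinates of x selected by v.  Encoded as a d-tuple whose
   unselected coordinates are set to 0; together with v this determines
   (and is determined by) the selected values. *)
Definition sel (v : d.-tuple bool) (x : d.-tuple R) : d.-tuple R :=
  [tuple if tnth v i then tnth x i else 0 | i < d].

Definition Eind (e : d.-tuple R -> d.-tuple bool) (v : d.-tuple bool)
  (x : d.-tuple R) : bool := e x == v.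

Definition is_rcd (q : probability (Y * d.-tuple R)%type R)
  (e : d.-tuple R -> d.-tuple bool)
  (kappa : d.-tuple bool -> R.-pker (d.-tuple R) ~> (Y * bool)%type) : Prop :=
  forall (v : d.-tuple bool) (A : set (d.-tuple R)) (B : set (Y * bool)%type),
    measurable A -> measurable B ->
    q [set w | A (sel v w.2) /\ B (w.1, Eind e v w.2)] =
    (\int[q]_(w in [set w | A (sel v w.2)]) kappa v (sel v w.2) B)%E.

Definition cond_indep_at
  (kappa : d.-tuple bool -> R.-pker (d.-tuple R) ~> (Y * bool)%type)
  (v : d.-tuple bool) (a : d.-tuple R) : Prop :=
  forall (A : set Y) (B : set bool), measurable A -> measurable B ->
    kappa v a (A `*` B) = (kappa v a (A `*` setT) * kappa v a (setT `*` B))%E.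

Definition encoding (q : probability (Y * d.-tuple R)%type R)
  (e : d.-tuple R -> d.-tuple bool)
  (kappa : d.-tuple bool -> R.-pker (d.-tuple R) ~> (Y * bool)%type) : Prop :=
  exists S : set (d.-tuple bool * d.-tuple R)%type,
    [/\ measurable S,
        (0 < q [set w | S (e w.2, sel (e w.2) w.2)])%E &
        forall v a, S (v, a) -> ~ cond_indep_at kappa v a].

End explanations.

(* Main.v *)
Require Import Defs.
From HB Require Import structures.
From mathcomp Require Import all_boot all_order all_algebra.
From mathcomp Require Import all_classical all_reals all_analysis.
From mathcomp Require Import measurable_realfun.
Import Order.TTheory GRing.Theory Num.Theory.
Local Open Scope classical_set_scope.
Local Open Scope ring_scope.
Module Helpers.
Import numFieldNormedType.Exports.
Set Implicit Arguments.
Unset Strict Implicit.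

Section tup.
Variables (R : realType) (n : nat).
Local Notation T := (n.-tuple R).

Definition conv (u : nat -> R) (l : R) :=
  forall e, 0 < e -> exists N, forall k, (N <= k)%N -> `|u k - l| < e.

Lemma cvgn_conv (u : nat -> R) : cvgn u -> exists l, conv u l.
Proof.
move=> cu; exists (limn u) => e e0.
have /cvgrPdist_lt/(_ e e0) [N _ HN] := cu; exists N => k Nk.
by rewrite distrC; apply: HN.
Qed.

Definition sinc (f : nat -> nat) := forall k, (f k < f k.+1)%N.

Lemma sinc_ge f : sinc f -> forall k, (k <= f k)%N.
Proof.
move=> sf; elim => [//|k IH]; exact: leq_ltn_trans IH (sf k).
Qed.

Lemma sinc_comp f g : sinc f -> sinc g -> sinc (f \o g).
Proof.
move=> sf sg k /=.
have mono : {homo f : a b / (a < b)%N} := homo_ltn ltn_trans sf.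
exact: mono.
Qed.

Lemma conv_sub u l f : conv u l -> sinc f -> conv (u \o f) l.
Proof.
move=> cu sf e e0; have [N HN] := cu e e0; exists N => k Nk /=.
apply: HN; apply: (leq_trans Nk); exact: sinc_ge.
Qed.

Lemma bw_tuple (u : nat -> T) (N : R) :
  (forall k i, `|tnth (u k) i| <= N) ->
  exists f, sinc f /\ exists z : T, forall i, conv (fun k => tnth (u (f k)) i) (tnth z i).
Proof.
move=> bu.
have main : forall m, exists f, sinc f /\ forall i : 'I_n, (i < m)%N ->
    exists l, conv (fun k => tnth (u (f k)) i) l.
  elim => [|m [f [sf Hf]]]; first by exists id; split => // k.
  case: (ltnP m n) => mn; last first.
    exists f; split => // i im; apply: Hf; exact: leq_trans (ltn_ord i) mn.
  pose i0 := Ordinal mn.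
  have bnd : bounded_fun (fun k => tnth (u (f k)) i0).
    exists N; split; first exact: num_real.
    move=> x Nx k _; exact: le_trans (bu _ _) (ltW Nx).
  have [g /increasing_seqP sg cg] := bolzano_weierstrass bnd.
  exists (f \o g); split; first exact: sinc_comp.
  move=> i; rewrite ltnS leq_eqVlt => /orP[/eqP im|im].
    have -> : i = i0 by apply: val_inj.
    exact: cvgn_conv.
  have [l Hl] := Hf i im; exists l.
  exact: (@conv_sub (fun k => tnth (u (f k)) i)).
have [f [sf Hf]] := main n.
have /choice[z Hz] : forall i : 'I_n, exists l, conv (fun k => tnth (u (f k)) i) l.
  by move=> i; apply: Hf.
exists f; split => //; exists [tuple z i | i < n] => i.
by rewrite tnth_mktuple.
Qed.

Definition box (c : T) (r : R) : set T :=
  [set x | forall i, `|tnth x i - tnth c i| < r].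

Definition closedT (F : set T) :=
  forall x, ~ F x -> exists2 r, 0 < r & forall y, box x r y -> ~ F y.

Lemma closedT_seq F (u : nat -> T) z : closedT F -> (forall k, F (u k)) ->
  (forall i, conv (fun k => tnth (u k) i) (tnth z i)) -> F z.
Proof.
move=> cF Fu cu; apply: contrapT => nFz.
have [r r0 Hr] := cF _ nFz.
have /choice[Nf HN] : forall i : 'I_n, exists N, forall k, (N <= k)%N ->
    `|tnth (u k) i - tnth z i| < r by move=> i; exact: cu.
apply: (Hr (u (\max_i Nf i))) => //.
move=> i; apply: HN; exact: leq_bigmax.
Qed.

Lemma measurable_box c r : measurable (box c r).
Proof.
pose B (k : nat) : set T := [set x | forall i : 'I_n, val i = k ->
  `|tnth x i - tnth c i| < r].
have -> : box c r = \bigcap_k B k.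
  apply/seteqP; split => x /=.
    by move=> H k _ i _; apply: H.
  by move=> H i; apply: (H (val i)).
apply: bigcapT_measurable => k.
case: (ltnP k n) => kn.
  have -> : B k = (fun x : T => tnth x (Ordinal kn)) @^-1` `]tnth c (Ordinal kn) - r, tnth c (Ordinal kn) + r[.
    apply/seteqP; split => x /=.
      by move=> H; rewrite in_itv /= -ltr_distlC distrC; apply: H.
    rewrite in_itv /= -ltr_distlC distrC => H i ik.
    by have -> : i = Ordinal kn by apply: val_inj.
  rewrite -[X in measurable X]setTI; apply: (@measurable_tnth _ R n (Ordinal kn) measurableT); exact: measurable_itv.
have -> : B k = setT.
  apply/seteqP; split => x //= _ i ik.
  by move: (ltn_ord i); rewrite ik ltnNge kn.
exact: measurableT.
Qed.

Lemma rat_approx (x : T) e : 0 < e ->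
  exists r : n.-tuple rat, box (map_tuple ratr r) e x.
Proof.
move=> e0.
have /choice[f Hf] : forall i : 'I_n, exists q : rat, `|tnth x i - ratr q| < e.
  move=> i.
  have : tnth x i - e < tnth x i + e by rewrite ltrBlDr -addrA ltrDl addr_gt0.
  move=> /rat_in_itvoo[q]; rewrite in_itv /= -ltr_distlC => H; exists q.
  exact: H.
exists [tuple f i | i < n] => i.
by rewrite tnth_map tnth_mktuple.
Qed.

Lemma closedT_measurable F : closedT F -> measurable F.
Proof.
move=> cF.
pose H (k m : nat) : set T :=
  if (unpickle m : option (n.-tuple rat)) is Some r then
    if pselect (exists y, F y /\ box (map_tuple ratr r) (k.+1%:R^-1) y)
    then box (map_tuple ratr r) (k.+1%:R^-1) else set0
  else set0.
have -> : F = \bigcap_k \bigcup_m H k m.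
  apply/seteqP; split => x.
    move=> Fx k _.
    have [|r Hr] := @rat_approx x (k.+1%:R^-1).
      by rewrite invr_gt0 ltr0Sn.
    exists (pickle r) => //; rewrite /H pickleK.
    case: pselect => // -[]; by exists x.
  move=> Hx; apply: contrapT => nFx.
  have [r r0 Hr] := cF _ nFx.
  have [k Hk] := ltr_add_invr (divr_gt0 r0 (ltr0Sn R 1)).
  rewrite add0r in Hk.
  have [m _] := Hx k I; rewrite /H.
  case: (unpickle m) => [rr|//].
  case: pselect => [[y [Fy By]] Bx|//].
  apply: (Hr y) => // i.
  rewrite -(subrKA (tnth (map_tuple ratr rr) i)).
  apply: (le_lt_trans (ler_normD _ _)).
  rewrite (splitr r); apply: ltrD; first exact: lt_trans (By i) Hk.
  by rewrite distrC; exact: lt_trans (Bx i) Hk.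
apply: bigcapT_measurable => k; apply: bigcupT_measurable => m.
rewrite /H; case: (unpickle m) => [rr|//]; case: ifP => _ //.
exact: measurable_box.
Qed.

End tup.


Section tup2.
Variables (R : realType) (n : nat).
Local Notation T := (n.-tuple R).

Lemma closedT0 : closedT (set0 : set T).
Proof. by move=> x _; exists 1 => // y _ []. Qed.

Lemma closedTT : closedT (setT : set T).
Proof. by move=> x /(_ I). Qed.

Lemma closedTU (F G : set T) : closedT F -> closedT G -> closedT (F `|` G).
Proof.
move=> cF cG x /not_orP[nF nG].
have [r r0 Hr] := cF x nF; have [s s0 Hs] := cG x nG.
exists (Num.min r s); first by rewrite lt_min r0 s0.
move=> y By [Fy|Gy].
  by apply: (Hr y) => // i; have := By i; rewrite lt_min => /andP[].
by apply: (Hs y) => // i; have := By i; rewrite lt_min => /andP[].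
Qed.

Lemma closedT_bigcap I (D : set I) (F : I -> set T) :
  (forall i, closedT (F i)) -> closedT (\bigcap_(i in D) F i).
Proof.
move=> cF x nx.
have [i Di nFi] : exists2 i, D i & ~ F i x.
  apply: contrapT => H; apply: nx => i Di; apply: contrapT => nF.
  by apply: H; exists i.
have [r r0 Hr] := cF i x nFi; exists r => // y By Fy.
by apply: (Hr y) => //; apply: Fy.
Qed.

Lemma closedTI (F G : set T) : closedT F -> closedT G -> closedT (F `&` G).
Proof.
move=> cF cG.
have -> : F `&` G = \bigcap_(i in [set: bool]) (if i then F else G).
  apply/seteqP; split => x.
    by move=> [Fx Gx] [] _.
  by move=> H; split; [apply: (H true)|apply: (H false)].
by apply: closedT_bigcap => -[].
Qed.

Lemma closedT_bigsetU (F : nat -> set T) N : (forall k, closedT (F k)) ->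
  closedT (\big[setU/set0]_(k < N) F k).
Proof.
move=> cF; elim: N => [|N IH]; first by rewrite big_ord0; exact: closedT0.
by rewrite big_ord_recr /=; apply: closedTU.
Qed.

Lemma closedT_le i a : closedT [set x : T | tnth x i <= a].
Proof.
move=> x /negP; rewrite -ltNge => ax.
exists (tnth x i - a); first by rewrite subr_gt0.
move=> y By; apply/negP; rewrite -ltNge.
have := By i; rewrite ltr_distl => /andP[+ _].
by rewrite opprB addrCA subrr addr0.
Qed.

Lemma closedT_ge i a : closedT [set x : T | a <= tnth x i].
Proof.
move=> x /negP; rewrite -ltNge => ax.
exists (a - tnth x i); first by rewrite subr_gt0.
move=> y By; apply/negP; rewrite -ltNge.
have := By i; rewrite ltr_distl => /andP[_].
by rewrite addrCA subrr addr0.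
Qed.

Definition cbox (N : R) : set T := [set x | forall i, `|tnth x i| <= N].

Lemma closedT_cbox N : closedT (cbox N).
Proof.
have -> : cbox N = \bigcap_(i in [set: 'I_n])
    ([set x : T | tnth x i <= N] `&` [set x : T | - N <= tnth x i]).
  apply/seteqP; split => x.
    by move=> H i _; have := H i; rewrite ler_norml => /andP[? ?]; split.
  by move=> H i; have [? ?] := H i I; rewrite ler_norml; apply/andP; split.
apply: closedT_bigcap => i; apply: closedTI; [exact: closedT_le|exact: closedT_ge].
Qed.

Lemma conv_uniq (w : nat -> R) l l' : conv w l -> conv w l' -> l = l'.
Proof.
move=> cl cl'; apply: contrapT => ne.
have e0 : 0 < `|l - l'| / 2 by rewrite divr_gt0 // normr_gt0 subr_eq0; apply/eqP.
have [N1 H1] := cl _ e0; have [N2 H2] := cl' _ e0.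
have := H1 (maxn N1 N2) (leq_maxl _ _); have := H2 (maxn N1 N2) (leq_maxr _ _).
move=> h2 h1.
set m := maxn N1 N2 in h1 h2; set e := `|l - l'| / 2 in h1 h2 e0.
have : `|l - l'| < e + e.
  have -> : l - l' = (l - w m) + (w m - l') by rewrite addrA subrK.
  apply: (le_lt_trans (ler_normD _ _)); apply: ltrD => //.
  by rewrite distrC.
by rewrite /e -splitr ltxx.
Qed.

Lemma inv_le (a b : nat) : (a <= b)%N -> b.+1%:R^-1 <= a.+1%:R^-1 :> R.
Proof. by move=> ab; rewrite lef_pV2 ?posrE ?ltr0Sn // ler_nat ltnS. Qed.

Lemma tnth_sel (v : n.-tuple bool) (x : T) i :
  tnth (sel v x) i = if tnth v i then tnth x i else 0.
Proof. by rewrite /sel tnth_mktuple. Qed.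

Lemma closedT_sel_image (v : n.-tuple bool) F N :
  closedT F -> closedT (sel v @` (F `&` cbox N)).
Proof.
move=> cF a na; apply: contrapT => H.
have /choice[u Hu] : forall k : nat, exists x, (F `&` cbox N) x /\
    box (sel v x) (k.+1%:R^-1) a.
  move=> k; apply: contrapT => nk; apply: H; exists k.+1%:R^-1.
    by rewrite invr_gt0 ltr0Sn.
  move=> y By [x Kx xy]; apply: nk; exists x; split => // i.
  by rewrite xy distrC; apply: By.
have [f [sf [z Hz]]] := @bw_tuple R n u N (fun k i => (Hu k).1.2 i).
have Kz : (F `&` cbox N) z.
  apply: (closedT_seq (u := u \o f)) => //.
    by apply: closedTI => //; exact: closedT_cbox.
  by move=> k; apply: (Hu (f k)).1.
apply: na; exists z => //; apply: eq_from_tnth => i; rewrite tnth_sel.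
pose w k := tnth (sel v (u (f k))) i.
apply: (@conv_uniq w).
  case vi: (tnth v i) => e e0.
    have [K HK] := Hz i e e0; exists K => k Kk.
    by rewrite /w tnth_sel vi; apply: HK.
  by exists 0%N => k _; rewrite /w tnth_sel vi subrr normr0.
move=> e e0.
have [K HK] := ltr_add_invr e0; rewrite add0r in HK.
exists K => k Kk; rewrite /w.
rewrite distrC; apply: (lt_le_trans ((Hu (f k)).2 i)).
apply: le_trans (ltW HK).
apply: inv_le; apply: leq_trans Kk _; exact: sinc_ge.
Qed.

End tup2.


Lemma ereal_cvg0_lt (R : realType) (s : nat -> \bar R) (eps : R) :
  s @ \oo --> 0%E -> 0 < eps -> exists N, (s N < eps%:E)%E.
Proof.
move=> /fine_cvgP[fs cs] e0.
have /cvgrPdist_lt/(_ eps e0) cs' := cs.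
have [N _ HN] := filterI fs cs'.
exists N; have [sf ls] := HN N (leqnn N).
rewrite -(fineK sf) lte_fin.
apply: le_lt_trans ls; rewrite sub0r normrN /=; exact: ler_norm.
Qed.

Section reg.
Variables (R : realType) (n : nat).
Local Notation T := (n.-tuple R).
Variable mu : {measure set T -> \bar R}.
Hypothesis mufin : (mu setT < +oo)%E.

Lemma mu_fin A : (mu A < +oo)%E.
Proof.
apply: le_lt_trans mufin.
Abort.

Definition goodS (G : set T) := measurable G /\ forall eps : R, 0 < eps ->
  exists F U, [/\ closedT F, closedT (~` U), F `<=` G, G `<=` U &
                  (mu (U `\` F) < eps%:E)%E].

Lemma closedC_measurable (U : set T) : closedT (~` U) -> measurable U.
Proof.
by move=> cU; rewrite -[U]setCK; apply: measurableC; exact: closedT_measurable.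
Qed.

Lemma muD_fin (A : set T) : measurable A -> (mu A < +oo)%E.
Proof.
move=> mA; apply: le_lt_trans mufin; apply: le_measure => //; rewrite inE //.
Qed.

Lemma goodS0 : goodS set0.
Proof.
split => // eps e0; exists set0, set0; split => //.
- exact: closedT0.
- by rewrite setC0; exact: closedTT.
- by rewrite setD0 measure0 lte_fin.
Qed.

Lemma goodSC A : goodS A -> goodS (setT `\` A).
Proof.
move=> [mA HA]; split; first exact: measurableD.
move=> eps e0; have [F [U [cF cU FA AU muUF]]] := HA eps e0.
exists (~` U), (~` F); split => //.
- by rewrite setCK.
- by move=> x Ux; split => // Ax; apply: Ux; apply: AU.
- by move=> x [_ nAx] Fx; apply: nAx; apply: FA.
- by rewrite setDE setCK setIC -setDE.
Qed.

Lemma goodS_bigcup (A : nat -> set T) : (forall k, goodS (A k)) ->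
  goodS (\bigcup_k A k).
Proof.
move=> gA; split; first by apply: bigcupT_measurable => k; case: (gA k).
move=> eps e0.
have e20 : 0 < eps / 2 by rewrite divr_gt0.
have /choice[FU HFU] : forall k, exists FU : set T * set T,
    [/\ closedT FU.1, closedT (~` FU.2), FU.1 `<=` A k, A k `<=` FU.2 &
     (mu (FU.2 `\` FU.1) < (eps / 2 / (2 ^ k.+1)%:R)%:E)%E].
  move=> k; have [_ Hk] := gA k.
  have [|F [U HU]] := Hk (eps / 2 / (2 ^ k.+1)%:R).
    by rewrite divr_gt0 // ltr0n expn_gt0.
  by exists (F, U).
pose F k := (FU k).1; pose U k := (FU k).2.
have cF k : closedT (F k) by case: (HFU k).
have cU k : closedT (~` U k) by case: (HFU k).
have mF k : measurable (F k) by exact: closedT_measurable.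
have mU k : measurable (U k) by exact: closedC_measurable.
pose Fi := \bigcup_k F k; pose UU := \bigcup_k U k.
have mFi : measurable Fi by exact: bigcupT_measurable.
have mUU : measurable UU by exact: bigcupT_measurable.
pose G N := \bigcup_(k < N) F k.
have mG N : measurable (G N).
  by rewrite /G bigcup_mkord; apply: bigsetU_measurable => k _.
have GFi N : G N `<=` Fi by move=> x [k _ Fx]; exists k.
pose D N := Fi `\` G N.
have D0 : (mu \o D) @ \oo --> 0%E.
  have -> : (0 = mu (\bigcap_N D N))%E.
    have -> : \bigcap_N D N = set0; last by rewrite measure0.
    apply/seteqP; split => x // Hx.
    have [[k _ Fkx] _] := Hx 0%N I.
    have [_ nG] := Hx k.+1 I; apply: nG; exists k => //=.
  apply: nonincreasing_cvg_mu.
  - exact: muD_fin (measurableD mFi (mG 0%N)).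
  - by move=> N; apply: measurableD.
  - by apply: bigcapT_measurable => N; apply: measurableD.
  - apply/nonincreasing_seqP => N; apply/subsetPset => x [Fx nG]; split => //.
    by move=> [k /= kN Fkx]; apply: nG; exists k => //=; apply: ltn_trans kN _.
have [N HN] := ereal_cvg0_lt D0 e20.
exists (G N), UU; split.
- by rewrite /G bigcup_mkord; apply: closedT_bigsetU.
- by rewrite setC_bigcup; apply: closedT_bigcap.
- by move=> x [k _ Fkx]; exists k => //; case: (HFU k) => _ _ + _ _; apply.
- by move=> x [k _ Akx]; exists k => //; case: (HFU k) => _ _ _ + _; apply.
have sub : UU `\` G N `<=` (UU `\` Fi) `|` D N.
  move=> x [Ux nG]; have [Fx|nFx] := pselect (Fi x).
    by right.
  by left.
have le1 : (mu (UU `\` G N) <= mu ((UU `\` Fi) `|` D N))%E.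
  apply: le_measure => //; rewrite inE.
    exact: measurableD.
  by apply: measurableU; apply: measurableD.
apply: (le_lt_trans le1).
apply: (le_lt_trans (measureU2 _ _ _)).
- exact: measurableD.
- exact: measurableD.
rewrite [eps]splitr EFinD; apply: lee_ltD => //.
  rewrite ge0_fin_numE ?measure_ge0 //; apply: muD_fin.
  exact: measurableD.
have sub2 : UU `\` Fi `<=` \bigcup_k (U k `\` F k).
  move=> x [[k _ Ukx] nFi]; exists k => //; split => // Fkx; apply: nFi.
  by exists k.
apply: (le_trans (measure_sigma_subadditive _ _ _ sub2)).
- by move=> k; apply: measurableD.
- exact: measurableD.
apply: le_trans (epsilon_trick0 xpredT (ltW e20)).
apply: lee_nneseries => [k _ _|k _]; first exact: measure_ge0.
by apply: ltW; case: (HFU k).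
Qed.


Lemma goodS_gen (i : 'I_n) (a : R) :
  goodS ((fun x : T => tnth x i) @^-1` `]-oo, a[).
Proof.
set Gs := _ @^-1` _.
have GsE : Gs = [set x | tnth x i < a].
  by apply/seteqP; split => x; rewrite /Gs /= in_itv.
have mGs : measurable Gs.
  rewrite -[Gs]setTI.
  exact: (@measurable_tnth _ R n i measurableT _ (measurable_itv _)).
split => // eps e0.
pose F k : set T := [set x | tnth x i <= a - k.+1%:R^-1].
have mF k : measurable (F k) by apply: closedT_measurable; exact: closedT_le.
pose D k := Gs `\` F k.
have D0 : (mu \o D) @ \oo --> 0%E.
  have -> : (0 = mu (\bigcap_k D k))%E.
    have -> : \bigcap_k D k = set0; last by rewrite measure0.
    apply/seteqP; split => x // Hx.
    have [Gx _] := Hx 0%N I; move: (Gx); rewrite GsE /= => xa.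
    have [k Hk] := ltr_add_invr xa.
    have [_ nF] := Hx k I; apply: nF; rewrite /F /=.
    by rewrite lerBrDr ltW.
  apply: nonincreasing_cvg_mu.
  - exact: muD_fin (measurableD mGs (mF 0%N)).
  - by move=> k; apply: measurableD.
  - by apply: bigcapT_measurable => k; apply: measurableD.
  - apply/nonincreasing_seqP => k; apply/subsetPset => x [Gx nF]; split => //.
    move=> Fx; apply: nF; rewrite /F /= in Fx *; apply: le_trans Fx _.
    by rewrite lerD2l lerN2; apply: inv_le.
have [k Hk] := ereal_cvg0_lt D0 e0.
exists (F k), Gs; split => //.
- exact: closedT_le.
- have -> : ~` Gs = [set x | a <= tnth x i].
    by rewrite GsE; apply/seteqP; split => x /=; rewrite leNgt => /negP.
  exact: closedT_ge.
- move=> x; rewrite GsE /F /= => H; apply: le_lt_trans H _.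
  by rewrite ltrBlDr ltrDl invr_gt0 ltr0Sn.
Qed.

Lemma goodS_sigma : sigma_algebra setT goodS.
Proof.
split; [exact: goodS0|exact: goodSC|exact: goodS_bigcup].
Qed.

Lemma goodS_coord (i : 'I_n) (B : set R) : measurable B ->
  goodS ((fun x : T => tnth x i) @^-1` B).
Proof.
pose DR := [set B : set R | goodS ((fun x : T => tnth x i) @^-1` B)].
have sDR : sigma_algebra setT DR.
  split.
  - by rewrite /DR /= preimage_set0; exact: goodS0.
  - move=> A; rewrite /DR /= => gA.
    have -> : (fun x : T => tnth x i) @^-1` (setT `\` A) =
        setT `\` (fun x : T => tnth x i) @^-1` A.
      by apply/seteqP; split => x.
    exact: goodSC.
  - move=> A gA; rewrite /DR /= preimage_bigcup; exact: goodS_bigcup.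
move=> mB; suff : DR B by [].
have : (@measurable_realfun.RGenInftyO.G R).-sigma.-measurable B.
  by rewrite -measurable_realfun.RGenInftyO.measurableE.
apply: smallest_sub => // A [a ->].
exact: goodS_gen.
Qed.

Lemma measurable_goodS (A : set T) : measurable A -> goodS A.
Proof.
move=> mA; apply: (smallest_sub goodS_sigma _ mA).
apply: (big_ind (fun Y => Y `<=` goodS)) => //.
  by move=> Y1 Y2 h1 h2 Y [/h1|/h2].
move=> i _ Y [B mB <-]; rewrite setTI; exact: goodS_coord.
Qed.

Lemma inner_compact (G : set T) : measurable G -> (0 < mu G)%E ->
  exists F N, [/\ closedT F, F `<=` G & (0 < mu (F `&` cbox N))%E].
Proof.
move=> mG mu0.
have finG : mu G \is a fin_num.
  by rewrite ge0_fin_numE ?measure_ge0 //; exact: muD_fin.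
have [_ H] := measurable_goodS mG.
have [F [U [cF cU FG GU muUF]]] : exists F U, [/\ closedT F, closedT (~` U),
    F `<=` G, G `<=` U & (mu (U `\` F) < mu G)%E].
  have fp : 0 < fine (mu G).
    by rewrite -lte_fin fineK.
  by have := H _ fp; rewrite fineK.
have mF : measurable F by exact: closedT_measurable.
have mU : measurable U by exact: closedC_measurable.
have muF : (0 < mu F)%E.
  rewrite lt0e measure_ge0 andbT; apply/negP => /eqP F0.
  have mUF : measurable (U `\` F) by exact: measurableD.
  have h1 : (mu G <= mu (F `|` (U `\` F)))%E.
    apply: le_measure; rewrite ?inE //; first exact: measurableU.
    move=> x Gx; have [Fx|nFx] := pselect (F x); first by left.
    by right; split => //; apply: GU.
  have e0 : (mu F + mu (U `\` F) = mu (U `\` F))%E by rewrite F0 add0e.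
  have := le_trans h1 (measureU2 mu mF mUF); rewrite e0 => h2.
  by have := le_lt_trans h2 muUF; rewrite ltxx.
apply: contrapT => nex.
have F0 : forall N : nat, mu (F `&` cbox N%:R) = 0.
  move=> N; apply/eqP; rewrite -measure_le0 leNgt; apply/negP => h.
  by apply: nex; exists F, N%:R.
have Fcov : F = \bigcup_N (F `&` cbox N%:R).
  apply/seteqP; split => x; last by move=> [N _ []].
  move=> Fx; exists (\max_(i < n) (Num.trunc `|tnth x i|).+1)%N => //; split => // i.
  apply: ltW; apply: lt_le_trans (truncnS_gt _) _.
  by rewrite ler_nat (@leq_bigmax _ (fun i : 'I_n => (Num.trunc `|tnth x i|).+1)).
have : mu.-negligible F.
  rewrite Fcov; apply: negligible_bigcup => N.
  apply/negligibleP; last exact: F0.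
  apply: measurableI => //; apply: closedT_measurable; exact: closedT_cbox.
by move/(negligibleP _ mF) => muF0; move: muF; rewrite muF0 ltxx.
Qed.

End reg.


Lemma measurable_sel (R : realType) n (v : n.-tuple bool) :
  measurable_fun setT (@sel R n v).
Proof.
apply/measurable_fun_tnthP => i.
have -> : (fun x => tnth x i) \o @sel R n v =
    if tnth v i then (fun x => tnth x i) else cst 0.
  by apply/funext => x /=; rewrite tnth_sel; case: (tnth v i).
case: (tnth v i); [exact: measurable_tnth|exact: measurable_cst].
Qed.

Lemma measurable_tuple1 n (v : n.-tuple bool) : measurable [set v].
Proof.
pose B (k : nat) : set (n.-tuple bool) := [set x | forall i : 'I_n, val i = k ->
  tnth x i = tnth v i].
have -> : [set v] = \bigcap_k B k.
  apply/seteqP; split => x /=.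
    by move=> -> k _ i _.
  by move=> H; apply: eq_from_tnth => i; apply: (H (val i)).
apply: bigcapT_measurable => k.
case: (ltnP k n) => kn.
  have -> : B k = (fun x => tnth x (Ordinal kn)) @^-1` [set tnth v (Ordinal kn)].
    apply/seteqP; split => x /=.
      by move=> H; apply: H.
    move=> H i ik.
    by have -> : i = Ordinal kn by apply: val_inj.
  rewrite -[X in measurable X]setTI.
  by apply: (@measurable_tnth _ bool n (Ordinal kn) measurableT).
have -> : B k = setT.
  apply/seteqP; split => x //= _ i ik.
  by move: (ltn_ord i); rewrite ik ltnNge kn.
exact: measurableT.
Qed.

Lemma ci_of_zero (R : realType) (dY : measure_display) (Y : measurableType dY)
  n (k : R.-pker (n.-tuple R) ~> (Y * bool)%type) a :
  k a (setT `*` [set true]) = 0%E ->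
  forall (A : set Y) (B : set bool), measurable A -> measurable B ->
  k a (A `*` B) = (k a (A `*` setT) * k a (setT `*` B))%E.
Proof.
move=> H0 A B mA _.
have Ht A' : measurable A' -> k a (A' `*` [set true]) = 0%E.
  move=> mA'; apply/eqP; rewrite -measure_le0 -H0; apply: le_measure.
  - by rewrite inE; apply: measurableX.
  - by rewrite inE; apply: measurableX.
  by move=> [y b] [_ /= ->].
have Hf A' : measurable A' -> k a (A' `*` [set false]) = k a (A' `*` setT).
  move=> mA'.
  have -> : A' `*` setT = A' `*` [set false] `|` A' `*` [set true].
    apply/seteqP; split => -[y b] /=.
      by move=> [Ay _]; case: b; [right|left].
    by move=> [[Ay _]|[Ay _]].
  have e1 : (k a (A' `*` [set false]) + k a (A' `*` [set true]) =
      k a (A' `*` [set false]))%E by rewrite Ht // adde0.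
  rewrite measureU; try (by apply: measurableX).
    by rewrite e1.
  by apply/seteqP; split => -[y b] // /= [[_ ->] [_]].
have T1 : k a (setT `*` setT) = 1%E by rewrite setXTT prob_kernel.
have [Bt|Bnt] := pselect (B true); have [Bf|Bnf] := pselect (B false).
- have -> : B = setT by apply/seteqP; split => // -[].
  by rewrite T1 mule1.
- have -> : B = [set true].
    by apply/seteqP; split => -[] //= ?; exfalso; apply: Bnf.
  by rewrite Ht // Ht // mule0.
- have -> : B = [set false].
    by apply/seteqP; split => -[] //= ?; exfalso; apply: Bnt.
  by rewrite Hf // Hf // T1 mule1.
- have -> : B = set0.
    by apply/seteqP; split => -[] //= H; first [exact: (Bnt H) | exact: (Bnf H)].
  by rewrite !setX0 measure0 mule0.
Qed.

End Helpers.
Import Helpers.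

Import numFieldNormedType.Exports.
Theorem lemma2 (R : realType) (dY : measure_display) (Y : measurableType dY)
  (d : nat) (q : probability (Y * d.-tuple R)%type R)
  (e : d.-tuple R -> d.-tuple bool)
  (kappa : d.-tuple bool -> R.-pker (d.-tuple R) ~> (Y * bool)%type) :
  measurable_fun setT e ->
  is_rcd q e kappa ->
  (encoding q e kappa <->
   exists v : d.-tuple bool,
     (0 < q [set w | e w.2 = v])%E /\
     exists Sv : set (d.-tuple R),
       [/\ measurable Sv,
           Sv `<=` sel v @` [set x | e x = v],
           (0 < q [set w | Sv (sel v w.2)])%E &
           forall a, Sv a -> ~ cond_indep_at kappa v a]).
Proof.
move=> me rcd.
have msnd : measurable_fun [set: Y * d.-tuple R] snd := measurable_snd.
have mev v : measurable [set w : Y * d.-tuple R | e w.2 = v].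
  rewrite -[X in measurable X]setTI.
  have h := measurableT_comp me msnd; exact: (h measurableT [set v] (measurable_tuple1 v)).
have mselv v (A : set (d.-tuple R)) : measurable A ->
    measurable [set w : Y * d.-tuple R | A (sel v w.2)].
  move=> mA; rewrite -[X in measurable X]setTI.
  have h := measurableT_comp (@measurable_sel R d v) msnd; exact: (h measurableT A mA).
split.
- case=> S [mS qS nci].
  pose Wv v := [set w : Y * d.-tuple R | e w.2 = v /\ S (v, sel v w.2)].
  have mpair v : measurable_fun setT (fun x : d.-tuple R => (v, sel v x)).
    exact: measurable_fun_pair (measurable_cst _) ((@measurable_sel R d v)).
  have mWv v : measurable (Wv v).
    have -> : Wv v = [set w | e w.2 = v] `&`
        [set w : Y * d.-tuple R | S (v, sel v w.2)] by [].
    apply: measurableI; first exact: mev.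
    rewrite -[X in measurable X]setTI.
    have h := measurableT_comp (mpair v) msnd; exact: (h measurableT S mS).
  have [v qv] : exists v, (0 < q (Wv v))%E.
    apply: contrapT => nex.
    have W0 v : q (Wv v) = 0%E.
      apply/eqP; rewrite -measure_le0 leNgt; apply/negP => h.
      by apply: nex; exists v.
    pose Wk k := if (unpickle k : option (d.-tuple bool)) is Some v then Wv v
                 else set0.
    have mWk k : measurable (Wk k) by rewrite /Wk; case: unpickle.
    have WE : [set w : Y * d.-tuple R | S (e w.2, sel (e w.2) w.2)] =
        \bigcup_k Wk k.
      apply/seteqP; split => w.
        by move=> Sw; exists (pickle (e w.2)) => //; rewrite /Wk pickleK.
      move=> [k _]; rewrite /Wk; case: unpickle => [v'|//] [ev Sv].
      by rewrite /= ev.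
    have : q (\bigcup_k Wk k) = 0%E.
      apply/negligibleP; first exact: bigcupT_measurable.
      apply: negligible_bigcup => k; rewrite /Wk; case: unpickle => [v'|].
        by apply/negligibleP => //; exact: W0.
      exact: negligible_set0.
    by rewrite -WE => h; move: qS; rewrite h ltxx.
  pose G := [set x : d.-tuple R | e x = v /\ S (v, sel v x)].
  have mG : measurable G.
    have -> : G = e @^-1` [set v] `&` (fun x => (v, sel v x)) @^-1` S by [].
    apply: measurableI.
      by rewrite -[X in measurable X]setTI; apply: me => //; exact: measurable_tuple1.
    by rewrite -[X in measurable X]setTI; apply: (mpair v).
  pose nu := measure_function_pushforward__canonical__measure_function_Measure q msnd.
  have nufin : (nu [set: d.-tuple R] < +oo)%E.
    by change (q (snd @^-1` [set: d.-tuple R]) < +oo)%E; rewrite preimage_setT probability_setT ltry.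
  have nuG : nu G = q (Wv v) by [].
  have nuGpos : (0 < nu G)%E by rewrite nuG.
  have [F [N [cF FG Fpos]]] := inner_compact nufin mG nuGpos.
  exists v; split.
    apply: lt_le_trans qv _; apply: le_measure; rewrite ?inE //.
    by move=> w [].
  exists (sel v @` (F `&` cbox N)); split.
  - apply: closedT_measurable; exact: closedT_sel_image.
  - by move=> a [x [Fx _] <-]; exists x => //; have [] := FG x Fx.
  - have Fpos' : (0 < q (snd @^-1` (F `&` cbox N)))%E := Fpos.
    apply: lt_le_trans Fpos' _; apply: le_measure; rewrite ?inE.
    + rewrite -[X in measurable X]setTI; apply: (measurable_snd measurableT).
      apply: measurableI; apply: closedT_measurable => //; exact: closedT_cbox.
    + apply: mselv; apply: closedT_measurable; exact: closedT_sel_image.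
    + by move=> w Kw; exists w.2.
  - by move=> a [x [Fx _] <-]; have [_ Sx] := FG x Fx; exact: nci Sx.
- case=> v [qv [Sv [mSv sub pos nci]]].
  exists [set p | p.1 = v /\ Sv p.2]; split.
  - have -> : [set p : d.-tuple bool * d.-tuple R | p.1 = v /\ Sv p.2] =
        [set v] `*` Sv by [].
    apply: measurableX => //; exact: measurable_tuple1.
  - pose D := [set w : Y * d.-tuple R | Sv (sel v w.2)].
    have ZE : [set w : Y * d.-tuple R | (fun p : d.-tuple bool * d.-tuple R =>
          p.1 = v /\ Sv p.2) (e w.2, sel (e w.2) w.2)] =
        [set w | Sv (sel v w.2) /\ (setT `*` [set true]) (w.1, Eind e v w.2)].
      apply/seteqP; split => w /=.
        by move=> [ev Sw]; rewrite -ev; split => //; split => //=; rewrite /Eind ev eqxx.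
      by move=> [Sw [_ /=]]; rewrite /Eind => /eqP ev; rewrite ev.
    rewrite ZE (rcd v Sv (setT `*` [set true]) mSv (measurableX measurableT _)) //.
    pose f (w : Y * d.-tuple R) := kappa v (sel v w.2) ([set: Y] `*` [set true]).
    have mD : measurable D by exact: mselv.
    have mf : measurable_fun D f.
      apply: measurable_funS (measurableT) _ _ => //.
      apply: (measurableT_comp (measurable_kernel (kappa v) _ _)).
        exact: measurableX.
      exact: measurableT_comp ((@measurable_sel R d v)) msnd.
    rewrite lt0e integral_ge0 ?andbT; last by move=> w _; exact: measure_ge0.
    apply/negP => /eqP I0.
    have : ae_eq q D f (cst 0%E).
      apply/(ae_eq_integral_abs q mD mf).1.
      rewrite -[RHS]I0; apply: eq_integral => w _.
      by rewrite gee0_abs //; exact: measure_ge0.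
    case=> N [mN N0 subN].
    have [w [Dw fw]] : exists w, D w /\ f w = 0%E.
      apply: contrapT => nex.
      have DN : D `<=` N.
        move=> w Dw; apply: subN => /= h; apply: nex; exists w; split => //.
        exact: h.
      have qN0 : q N = 0%E := N0.
      have qD : (q D <= q N)%E.
        by apply: le_measure => //; rewrite inE.
      move: qD; rewrite qN0 => qD.
      have := lt_le_trans pos qD.
      by rewrite ltxx.
    apply: (nci _ Dw); move=> A B mA mB; exact: ci_of_zero.
  - by move=> v' a [/= -> Sa]; exact: nci.
Qed.
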